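(* For all integers $0 \le r \le m$ for which $H(r,m)$ is defined below, $H(r,m)$ is a generator matrix for the Reed–Muller code $\mathcal{R}(r,m)$ and hence a parity-check matrix for $\mathcal{R}(m-r-1,m)$.
   Context: All matrices are binary. The matrices $G(r,m)$, $0\le r\le m$, are defined recursively by $G(m,m) = I_{2^m}$ (identity), $G(0,m) = (11\cdots1)$ (all-ones row of length $2^m$), and for $0<r<m$, $$G(r,m) = \begin{pmatrix} G(r,m-1) & G(r,m-1) \\ \mathbf{0} & G(r-1,m-1)\end{pmatrix}.$$ The binary Reed–Muller code $\mathcal{R}(r,m)$ of order $r$ and length $2^m$ is the row space of $G(r,m)$; by convention $\mathcal{R}(-1,m)=\{\mathbf 0\}$, and $\mathcal{R}(r,m)^\perp = \mathcal{R}(m-r-1,m)$. A parity-check matrix for a code $\mathcal{C}$ is any matrix whose rows span $\mathcal{C}^\perp$. The matrices $H(r,m)$ are defined as follows: for all $m \ge 0$, $H(0,m) = (11\cdots1)$ (length $2^m$), $H(m-1,m) = G(m-1,m)$, $H(m,m) = I_{2^m}$; and for all positive integers $m$ and $r = 1,2,\ldots,m-2$, $$H(r,m) = \begin{pmatrix} H(r,m-1) & H(r,m-1) \\ \mathbf{0} & H(r-1,m-1) \\ H(r-1,m-1) & \mathbf{0}\end{pmatrix}.$$ *)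

(* Defs.v *)
(* Binary matrices are represented as lists of rows,
   each row a list of elements of 'F_2 (of length 2^m); the row space
   is taken through MathComp's matrix algebra (mxalgebra). *)
From mathcomp Require Import all_boot all_order all_algebra.
Unset Printing Implicit Defensive.
Import GRing.Theory.
Local Open Scope ring_scope.

Definition bmat := seq (seq 'F_2).

Definition idrows (m : nat) : bmat :=
  [seq [seq ((i == j)%:R : 'F_2) | j <- iota 0 (2 ^ m)%N] | i <- iota 0 (2 ^ m)%N].

Definition onesrow (m : nat) : bmat := [:: nseq (2 ^ m)%N (1 : 'F_2)].

Definition blk_AA_0B (n : nat) (A B : bmat) : bmat :=
  [seq x ++ x | x <- A] ++ [seq nseq n (0 : 'F_2) ++ x | x <- B].

(* G(r,m); values for r > m are irrelevant (never used) *)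
Fixpoint Gm (r m : nat) : bmat :=
  match m with
  | 0 => idrows 0
  | m'.+1 =>
      if r == m'.+1 then idrows m'.+1
      else if r == 0%N then onesrow m'.+1
      else blk_AA_0B (2 ^ m')%N (Gm r m') (Gm r.-1 m')
  end.

Fixpoint Hm (r m : nat) : bmat :=
  match m with
  | 0 => onesrow 0
  | m'.+1 =>
      if r == 0%N then onesrow m'.+1
      else if r == m'.+1 then idrows m'.+1
      else if r == m' then Gm m' m'.+1
      else blk_AA_0B (2 ^ m')%N (Hm r m') (Hm r.-1 m')
           ++ [seq x ++ nseq (2 ^ m')%N (0 : 'F_2) | x <- Hm r.-1 m']
  end.

Definition mxof (n : nat) (M : bmat) : 'M['F_2]_(size M, n) :=
  \matrix_(i < size M, j < n) (nth [::] M i)`_j.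

Definition code (n : nat) := 'rV['F_2]_n -> Prop.

Definition rowspace (n : nat) (M : bmat) : code n :=
  fun v => (v <= mxof n M)%MS.

Definition RM (r : int) (m : nat) : code (2 ^ m)%N :=
  match r with
  | Posz k => rowspace (2 ^ m)%N (Gm k m)
  | Negz _ => fun v => v = 0
  end.

Definition dual (n : nat) (C : code n) : code n :=
  fun v => forall c : 'rV['F_2]_n, C c -> v *m c^T = 0.

Definition generator_matrix (n : nat) (M : bmat) (C : code n) : Prop :=
  forall v, rowspace n M v <-> C v.

Definition parity_check_matrix (n : nat) (M : bmat) (C : code n) : Prop :=
  forall v, rowspace n M v <-> dual n C v.

(* Main.v *)
Require Import Defs.
From mathcomp Require Import all_boot all_order all_algebra.
From mathcomp Require Import zify.
Set Implicit Arguments. Unset Strict Implicit. Unset Printing Implicit Defensive.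
Import GRing.Theory.
Local Open Scope ring_scope.

Lemma PS k : (Posz k.+1 - 1 = Posz k)%R. Proof. by rewrite -addn1 PoszD addrK. Qed.
Lemma NS k : (Negz k - 1 = Negz k.+1)%R. Proof. by rewrite !NegzE -opprD -addn1 PoszD addrC. Qed.

Lemma oppF2 (x : 'F_2) : - x = x.
Proof. apply/val_inj. case: x => [[|[|]]] //. Qed.

Lemma oppmxF2 p n (v : 'M['F_2]_(p, n)) : - v = v.
Proof. by apply/matrixP => i j; rewrite mxE oppF2. Qed.

Section Blocks.
Variable F : fieldType.

Definition ortho p q n (a : 'M[F]_(p, n)) (B : 'M[F]_(q, n)) := a *m B^T == 0.

Lemma ortho_sub p q1 q2 n (a : 'M[F]_(p, n)) (B : 'M[F]_(q1, n)) (C : 'M[F]_(q2, n)) :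
  (B <= C)%MS -> ortho a C -> ortho a B.
Proof.
case/submxP => D ->; rewrite /ortho trmx_mul mulmxA => /eqP ->.
by rewrite mul0mx.
Qed.

Lemma ortho_eqmx p q1 q2 n (a : 'M[F]_(p, n)) (B : 'M[F]_(q1, n)) (C : 'M[F]_(q2, n)) :
  (B :=: C)%MS -> ortho a B = ortho a C.
Proof.
move=> e; apply/idP/idP; apply: ortho_sub; by rewrite e.
Qed.

Lemma ortho1 p n (a : 'M[F]_(p, n)) : ortho a 1%:M = (a == 0).
Proof. by rewrite /ortho trmx1 mulmx1. Qed.

Lemma BR p q1 q2 n1 (a : 'M[F]_(p, n1)) (b : 'M[F]_(p, n1))
   (A : 'M[F]_(q1, n1)) (B : 'M[F]_(q2, n1)) :
  (row_mx a b <= col_mx (row_mx A A) (row_mx 0 B))%MS = (a <= A)%MS && (b - a <= B)%MS.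
Proof.
apply/idP/andP.
  case/submxP => D; rewrite -[D]hsubmxK mul_row_col !mul_mx_row mulmx0 add_row_mx addr0.
  case/eq_row_mx => -> ->; split; first exact: submxMl.
  by rewrite addrC addKr submxMl.
case => /submxP [D1 ->] /submxP [D2 Hb].
have -> : b = D1 *m A + D2 *m B by rewrite -Hb addrC subrK.
apply/submxP; exists (row_mx D1 D2).
by rewrite mul_row_col !mul_mx_row mulmx0 add_row_mx addr0.
Qed.

Lemma OR p q1 n1 (a : 'M[F]_(p, n1)) (b : 'M[F]_(p, n1)) (A : 'M[F]_(q1, n1)) :
  (row_mx a b <= row_mx A A)%MS = (a <= A)%MS && (b - a == 0).
Proof.
apply/idP/andP.
  case/submxP => D; rewrite mul_mx_row.
  case/eq_row_mx => -> ->; split; first exact: submxMl.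
  by rewrite subrr.
case => /submxP [D1 ->] /eqP Hb.
have -> : b = D1 *m A by apply/eqP; rewrite -subr_eq0 Hb.
by apply/submxP; exists D1; rewrite mul_mx_row.
Qed.

Lemma BO p q1 q2 n1 (a : 'M[F]_(p, n1)) (b : 'M[F]_(p, n1))
   (A : 'M[F]_(q1, n1)) (B : 'M[F]_(q2, n1)) :
  ortho (row_mx a b) (col_mx (row_mx A A) (row_mx 0 B)) = ortho (a + b) A && ortho b B.
Proof.
rewrite /ortho tr_col_mx !tr_row_mx trmx0 mul_mx_row !mul_row_col mulmx0 add0r mulmxDl.
by rewrite row_mx_eq0.
Qed.

Lemma OO p q1 n1 (a : 'M[F]_(p, n1)) (b : 'M[F]_(p, n1)) (A : 'M[F]_(q1, n1)) :
  ortho (row_mx a b) (row_mx A A) = ortho (a + b) A.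
Proof. by rewrite /ortho tr_row_mx mul_row_col mulmxDl. Qed.

Lemma castc_sub p q n1 n2 (E : n1 = n2) (a : 'M[F]_(p, n1)) (B : 'M[F]_(q, n1)) :
  (castmx (erefl, E) a <= castmx (erefl, E) B)%MS = (a <= B)%MS.
Proof. by case: n2 / E; rewrite !castmx_id. Qed.

Lemma castc_eqmx p q n1 n2 (E : n1 = n2) (a : 'M[F]_(p, n1)) (B : 'M[F]_(q, n1)) :
  (castmx (erefl, E) a == castmx (erefl, E) B)%MS = (a == B)%MS.
Proof. by case: n2 / E; rewrite !castmx_id. Qed.

Lemma castc_ortho p q n1 n2 (E : n1 = n2) (a : 'M[F]_(p, n1)) (B : 'M[F]_(q, n1)) :
  ortho (castmx (erefl, E) a) (castmx (erefl, E) B) = ortho a B.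
Proof. by case: n2 / E; rewrite !castmx_id. Qed.

Lemma castc_eq0 p n1 n2 (E : n1 = n2) (a : 'M[F]_(p, n1)) :
  (castmx (erefl, E) a == 0) = (a == 0).
Proof. by case: n2 / E; rewrite !castmx_id. Qed.

Lemma castcK p n1 n2 (E : n1 = n2) (a : 'M[F]_(p, n2)) :
  castmx (erefl, E) (castmx (erefl, esym E) a) = a.
Proof. by case: n2 / E a => a; rewrite !castmx_id. Qed.

End Blocks.

Definition Xf n (A : bmat) (h : seq 'F_2 -> seq 'F_2) : 'M['F_2]_(size A, n) :=
  \matrix_(i < size A, j < n) (h (nth [::] A i))`_j.

Lemma mxof_map n A h : (mxof n (map h A) :=: Xf n A h)%MS.
Proof.
have e : size A = size (map h A) by rewrite size_map.
have -> : mxof n (map h A) = castmx (e, erefl) (Xf n A h).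
  apply/matrixP => i j; rewrite castmxE !mxE /= (nth_map [::]) //.
  by case: i => k Hk; move: (Hk); rewrite size_map.
exact: eqmx_cast.
Qed.

Lemma col_mx_eqmx m1 m2 m3 m4 n (A : 'M['F_2]_(m1, n)) (B : 'M['F_2]_(m2, n))
  (C : 'M['F_2]_(m3, n)) (D : 'M['F_2]_(m4, n)) :
  (A :=: C)%MS -> (B :=: D)%MS -> (col_mx A B :=: col_mx C D)%MS.
Proof.
move=> eAC eBD; apply: eqmx_trans (eqmx_sym (addsmxE _ _)) _.
apply: eqmx_trans (addsmxE _ _); exact: adds_eqmx.
Qed.

Lemma mxof_cat n A B : (mxof n (A ++ B) :=: col_mx (mxof n A) (mxof n B))%MS.
Proof.
have e : (size A + size B)%N = size (A ++ B) by rewrite size_cat.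
have -> : mxof n (A ++ B) = castmx (e, erefl) (col_mx (mxof n A) (mxof n B)).
  apply/matrixP => i j; rewrite castmxE !mxE /=.
  case: splitP => [k /= Hk | k /= Hk]; rewrite !mxE /= nth_cat Hk.
    by rewrite ltn_ord.
  by rewrite ltnNge leq_addr /= addKn.
exact: eqmx_cast.
Qed.

Lemma Xf_hcat n1 n2 A f g : (forall x, x \in A -> size (f x) = n1) ->
  Xf (n1 + n2) A (fun x => f x ++ g x) = row_mx (Xf n1 A f) (Xf n2 A g).
Proof.
move=> Hf; apply/matrixP => i j; rewrite !mxE.
have HA : nth [::] A i \in A by rewrite mem_nth.
case: splitP => [k /= Hk | k /= Hk]; rewrite !mxE nth_cat Hf // Hk.
  by rewrite ltn_ord.
by rewrite ltnNge leq_addr /= addKn.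
Qed.

Lemma Xf_zero n A : Xf n A (fun _ => nseq n 0) = 0.
Proof.
apply/matrixP => i j; rewrite !mxE nth_nseq; by case: ifP.
Qed.

Definition wf n (M : bmat) := forall x, x \in M -> size x = n.

Lemma dupE N A : wf N A ->
  (mxof (N + N) (map (fun x => x ++ x) A) :=: row_mx (mxof N A) (mxof N A))%MS.
Proof.
move=> w; apply: eqmx_trans (mxof_map _ _ _) _.
by rewrite (@Xf_hcat N N A id id w).
Qed.

Lemma zlE N B :
  (mxof (N + N) (map (fun x => nseq N 0 ++ x) B) :=: row_mx 0 (mxof N B))%MS.
Proof.
apply: eqmx_trans (mxof_map _ _ _) _.
rewrite (@Xf_hcat N N B (fun _ => nseq N 0) id) ?Xf_zero //.
by move=> x _; rewrite size_nseq.
Qed.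

Lemma zrE N B : wf N B ->
  (mxof (N + N) (map (fun x => x ++ nseq N 0) B) :=: row_mx (mxof N B) 0)%MS.
Proof.
move=> w; apply: eqmx_trans (mxof_map _ _ _) _.
by rewrite (@Xf_hcat N N B id (fun _ => nseq N 0)) ?Xf_zero.
Qed.

Lemma blkE N A B : wf N A ->
  (mxof (N + N) (blk_AA_0B N A B) :=: col_mx (row_mx (mxof N A) (mxof N A)) (row_mx 0 (mxof N B)))%MS.
Proof.
move=> w; apply: eqmx_trans (mxof_cat _ _ _) _.
apply: col_mx_eqmx; [exact: dupE | exact: zlE].
Qed.

Lemma eN m : (2 ^ m + 2 ^ m = 2 ^ m.+1)%N.
Proof. by rewrite expnS mul2n addnn. Qed.

Lemma X_cast m M :
  mxof (2 ^ m.+1) M = castmx (erefl, eN m) (mxof (2 ^ m + 2 ^ m) M).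
Proof.
suff gen : forall n1 n2 (E : n1 = n2), mxof n2 M = castmx (erefl, E) (mxof n1 M) by [].
by move=> n1 n2 E; case: n2 / E; rewrite castmx_id.
Qed.

Lemma wf_idrows m : wf (2 ^ m) (idrows m).
Proof. by move=> x /mapP [i _ ->]; rewrite size_map size_iota. Qed.

Lemma wf_ones m : wf (2 ^ m) (onesrow m).
Proof. by move=> x; rewrite inE => /eqP ->; rewrite size_nseq. Qed.

Lemma wf_blk N A B : wf N A -> wf N B -> wf (N + N) (blk_AA_0B N A B).
Proof.
move=> wA wB x; rewrite mem_cat => /orP [] /mapP [y Hy ->]; rewrite size_cat.
  by rewrite wA.
by rewrite (wB y) // size_nseq.
Qed.

Lemma wf_Gm r m : wf (2 ^ m) (Gm r m).
Proof.
elim: m r => [|m IH] r /=; first exact: wf_idrows.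
case: ifP => _; first exact: wf_idrows.
case: ifP => _; first exact: wf_ones.
by rewrite -eN; apply: wf_blk.
Qed.

Lemma wf_Hm r m : wf (2 ^ m) (Hm r m).
Proof.
elim: m r => [|m IH] r /=; first exact: wf_ones.
case: ifP => _; first exact: wf_ones.
case: ifP => _; first exact: wf_idrows.
case: ifP => _; first exact: wf_Gm.
rewrite -eN => x; rewrite mem_cat => /orP [].
  by apply: wf_blk; apply: IH.
by case/mapP => y Hy ->; rewrite size_cat (IH r.-1 y) // size_nseq.
Qed.

Lemma idE m : (mxof (2 ^ m) (idrows m) :=: (1%:M : 'M['F_2]_(2 ^ m)))%MS.
Proof.
have e : (2 ^ m)%N = size (idrows m) by rewrite size_map size_iota.
have -> : mxof (2 ^ m) (idrows m) = castmx (e, erefl) 1%:M.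
  apply/matrixP => i j; rewrite castmxE !mxE /=.
  have Hi : (i < 2 ^ m)%N by case: i => k Hk; move: (Hk); rewrite size_map size_iota.
  rewrite (nth_map 0%N) ?size_iota // nth_iota // (nth_map 0%N) ?size_iota //.
  by rewrite nth_iota.
exact: eqmx_cast.
Qed.

Lemma Gmm m : Gm m m = idrows m.
Proof. by case: m => //= m; rewrite eqxx. Qed.

Lemma Gm0 m : Gm 0 m = onesrow m.
Proof. by case: m. Qed.

Lemma ones_split m : onesrow m.+1 = map (fun x => x ++ x) (onesrow m).
Proof. by rewrite /onesrow /= -eN nseqD. Qed.

Definition Rc (k : int) m (v : 'rV['F_2]_(2 ^ m)) : bool :=
  match k with
  | Posz k => if (m <= k)%N then true else (v <= mxof (2 ^ m) (Gm k m))%MS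
  | Negz _ => v == 0
  end.

Definition Dc (k : int) m (v : 'rV['F_2]_(2 ^ m)) : bool :=
  match k with
  | Posz k => if (m <= k)%N then v == 0 else ortho v (mxof (2 ^ m) (Gm k m))
  | Negz _ => true
  end.
Arguments Rc k m v : clear implicits.
Arguments Dc k m v : clear implicits.

Lemma RcE k m (v : 'rV['F_2]_(2 ^ m)) : (k <= m)%N -> Rc (Posz k) m v = (v <= mxof (2 ^ m) (Gm k m))%MS.
Proof.
move=> H; rewrite /Rc; case: (leqP m k) => // H1.
have -> : k = m by lia.
by rewrite Gmm idE submx1.
Qed.

Lemma DcE k m (v : 'rV['F_2]_(2 ^ m)) : (k <= m)%N -> Dc (Posz k) m v = ortho v (mxof (2 ^ m) (Gm k m)).
Proof.
move=> H; rewrite /Dc; case: (leqP m k) => // H1.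
have -> : k = m by lia.
by rewrite Gmm (ortho_eqmx _ (idE m)) ortho1.
Qed.

Lemma Rc_spec k m (a b : 'rV['F_2]_(2 ^ m)) :
  Rc k m.+1 (castmx (erefl, eN m) (row_mx a b)) = Rc k m a && Rc (k - 1) m (b - a).
Proof.
case: k => [k|k]; last first.
  rewrite NS /= castc_eq0 row_mx_eq0.
  by case: eqP => [->|] //=; rewrite subr0.
case: k => [|k].
  rewrite !RcE // Gm0 ones_split X_cast castc_sub (dupE (@wf_ones m)) OR.
  by rewrite -Gm0 -RcE.
rewrite PS; case: (leqP m k) => H.
  by rewrite /Rc ltnS H leqW.
rewrite !RcE // 1?ltnW //= eqSS ltn_eqF // X_cast castc_sub.
by rewrite (blkE _ (@wf_Gm _ _)) BR.
Qed.

Lemma Dc_spec k m (a b : 'rV['F_2]_(2 ^ m)) :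
  Dc k m.+1 (castmx (erefl, eN m) (row_mx a b)) = Dc k m (a + b) && Dc (k - 1) m b.
Proof.
case: k => [k|k]; last by rewrite NS.
case: k => [|k].
  rewrite !DcE // Gm0 ones_split X_cast castc_ortho (ortho_eqmx _ (dupE (@wf_ones m))) OO.
  by rewrite -Gm0 -DcE // andbT.
rewrite PS; case: (leqP m k) => H.
  rewrite /Dc ltnS H leqW // castc_eq0 row_mx_eq0.
  by case: (b =P 0) => [->|]; rewrite ?addr0 ?andbF.
rewrite !DcE // 1?ltnW //= eqSS ltn_eqF // X_cast castc_ortho.
by rewrite (ortho_eqmx _ (blkE _ (@wf_Gm _ _))) BO.
Qed.

Lemma split_rV m (v : 'rV['F_2]_(2 ^ m.+1)) :
  exists a b, v = castmx (erefl, eN m) (row_mx a b).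
Proof.
exists (lsubmx (castmx (erefl, esym (eN m)) v)), (rsubmx (castmx (erefl, esym (eN m)) v)).
by rewrite hsubmxK castcK.
Qed.

Lemma Rc_add k m (u v : 'rV['F_2]_(2 ^ m)) : Rc k m u -> Rc k m v -> Rc k m (u + v).
Proof.
case: k => [k|k] /=; last by move=> /eqP -> /eqP ->; rewrite addr0.
by case: ifP => // _; apply: addmx_sub.
Qed.

Lemma Rc_nest s m (v : 'rV['F_2]_(2 ^ m)) : Rc (s - 1) m v -> Rc s m v.
Proof.
elim: m s v => [|m IH] s v.
  case: s => [s|s]; first by rewrite /Rc.
  by rewrite NS.
have [a [b ->]] := split_rV v.
rewrite !Rc_spec => /andP [H1 H2]; apply/andP; split; exact: IH.
Qed.

Lemma duality m k (v : 'rV['F_2]_(2 ^ m)) : Dc k m v = Rc (Posz m - k - 1) m v.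
Proof.
elim: m k v => [|m IH] k v.
  case: k => [k|k].
    have -> : (Posz 0 - Posz k - 1 = Negz k)%R by rewrite NegzE; lia.
    by rewrite /Dc /=.
  have -> : (Posz 0 - Negz k - 1 = Posz k)%R by rewrite NegzE; lia.
  by rewrite /Rc /=.
have [a [b ->]] := split_rV v.
rewrite Dc_spec Rc_spec !IH.
set s := (Posz m - k)%R.
have -> : (Posz m - (k - 1) - 1 = s)%R by rewrite /s; lia.
have -> : (Posz m.+1 - k - 1 = s)%R by rewrite /s; lia.
have E : b - a = a + b by rewrite oppmxF2 addrC.
rewrite E; apply/andP/andP => [[H1 H2]|[H1 H2]]; split => //.
  have -> : a = (a + b) + b by rewrite -addrA -{2}(oppmxF2 b) subrr addr0.
  by apply: Rc_add => //; apply: Rc_nest.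
have -> : b = (a + b) + a by rewrite addrC addrA -{2}(oppmxF2 a) subrr add0r.
by apply: Rc_add => //; apply: Rc_nest.
Qed.

Lemma col_mx_absorb m1 m2 n (X : 'M['F_2]_(m1, n)) (Y : 'M['F_2]_(m2, n)) :
  (Y <= X)%MS -> (col_mx X Y :=: X)%MS.
Proof.
move=> sYX; apply/eqmxP; rewrite col_mx_sub submx_refl sYX /=.
by rewrite -addsmxE addsmxSl.
Qed.

Lemma Gnest r m : (r.+1 <= m)%N ->
  (mxof (2 ^ m) (Gm r m) <= mxof (2 ^ m) (Gm r.+1 m))%MS.
Proof.
move=> Hr; apply/row_subP => i.
have := @Rc_nest (Posz r.+1) m (row i (mxof (2 ^ m) (Gm r m))).
rewrite PS !RcE // 1?ltnW // row_sub; exact.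
Qed.

Lemma HmS r m : Hm r.+1 m.+1 = if r.+1 == m.+1 then idrows m.+1 else
  if r.+1 == m then Gm m m.+1 else
  blk_AA_0B (2 ^ m)%N (Hm r.+1 m) (Hm r m)
           ++ [seq x ++ nseq (2 ^ m)%N (0 : 'F_2) | x <- Hm r m].
Proof. by []. Qed.

Lemma GmS r m : Gm r.+1 m.+1 = if r.+1 == m.+1 then idrows m.+1 else
  blk_AA_0B (2 ^ m)%N (Gm r.+1 m) (Gm r m).
Proof. by []. Qed.

Lemma HG m r : (r <= m)%N -> (mxof (2 ^ m) (Hm r m) == mxof (2 ^ m) (Gm r m))%MS.
Proof.
elim: m r => [|m IH] r Hr.
  by apply/eqmxP; exact: eqmx_refl.
case: r Hr => [|r] Hr.
  by apply/eqmxP; exact: eqmx_refl.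
case: (eqVneq r m) => [->|Hne].
  by rewrite /= eqxx; apply/eqmxP; exact: eqmx_refl.
case: (eqVneq r.+1 m) => [E|Hne2].
  by rewrite HmS eqSS (negbTE Hne) E eqxx; apply/eqmxP; exact: eqmx_refl.
have Hlt : (r.+1 < m)%N by rewrite ltn_neqAle Hne2 /=; rewrite ltnS in Hr; rewrite ltn_neqAle Hne Hr.
rewrite HmS GmS eqSS (negbTE Hne) (negbTE Hne2) !X_cast castc_eqmx.
have IH1 := IH r.+1 (ltnW Hlt).
have IH0 := IH r (ltnW (ltnW Hlt)).
apply/eqmxP.
apply: eqmx_trans (mxof_cat _ _ _) _.
apply: eqmx_trans (col_mx_eqmx (blkE _ (@wf_Hm _ _)) (zrE (@wf_Hm _ _))) _.
apply: eqmx_trans (col_mx_absorb _) _.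
  rewrite BR sub0r eqmx_opp submx_refl andbT.
  rewrite (eqmxP IH1) (eqmxP IH0); exact: Gnest (ltnW Hlt).
apply: eqmx_trans _ (eqmx_sym (blkE _ (@wf_Gm _ _))).
apply/eqmxP/rV_eqP => u; rewrite -[u]hsubmxK !BR.
by rewrite (eqmxP IH1) (eqmxP IH0).
Qed.

Lemma dualE n M (v : 'rV['F_2]_n) : dual n (rowspace n M) v <-> ortho v (mxof n M).
Proof.
split.
  move=> H; apply/eqP/matrixP => i j.
  have := H _ (row_sub j (mxof n M)) => /matrixP /(_ i 0) E.
  transitivity ((v *m (row j (mxof n M))^T) i 0); last by rewrite E !mxE.
  by rewrite !mxE; apply: eq_bigr => k _; rewrite !mxE.
move=> H c Hc; apply/eqP; exact: ortho_sub Hc H.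
Qed.

Theorem proposition10 (r m : nat) :
  (r <= m)%N ->
  generator_matrix (2 ^ m)%N (Hm r m) (RM (Posz r) m) /\
  parity_check_matrix (2 ^ m)%N (Hm r m) (RM (Posz m - Posz r - 1)%R m).
Proof.
move=> Hr; have HGr := HG Hr; split.
  by move=> v; rewrite /rowspace /RM /rowspace (eqmxP HGr).
move=> v; case: (eqVneq r m) => [E|Hne].
  subst r; rewrite subrr sub0r /=; split.
    by move=> _ c ->; rewrite trmx0 mulmx0.
  by move=> _; rewrite /rowspace (eqmxP HGr) Gmm idE submx1.
have Hlt : (r < m)%N by rewrite ltn_neqAle Hne Hr.
have -> : (Posz m - Posz r - 1 = Posz (m - r - 1))%R by lia.
change (rowspace (2 ^ m) (Hm r m) v <-> dual (2 ^ m) (rowspace (2 ^ m) (Gm (m - r - 1) m)) v).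
have E : ortho v (mxof (2 ^ m) (Gm (m - r - 1) m)) = (v <= mxof (2 ^ m) (Hm r m))%MS.
  rewrite -DcE; last by lia.
  rewrite duality.
  have -> : (Posz m - Posz (m - r - 1) - 1 = Posz r)%R by lia.
  by rewrite RcE // (eqmxP HGr).
have D := @dualE (2 ^ m) (Gm (m - r - 1) m) v.
split => Hv.
  by apply/D.2; rewrite E.
by rewrite /rowspace -E; apply: D.1.
Qed.
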